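(* Let $V$ be a vector space and $Mag(V)$ the free unital magmatic algebra with its reduced coproduct $\delta$. For a planar binary rooted tree $t$ with $r$ leaves and $v_1,\dots,v_r\in V$, $$\delta(t;v_1\dots v_r)=\sum_{i=1}^{r-1}(t^i_{(1)};v_1\dots v_i)\otimes(t^i_{(2)};v_{i+1}\dots v_r).$$
   Context: $Mag(V)=\bigoplus_{n\ge0}\mathbb K[Y_{n-1}]\otimes V^{\otimes n}$, $Y_{n-1}$ the set of planar binary rooted trees with $n$ leaves ($n=0$ summand $\mathbb K1$), product $(t;v_1\dots v_p)\cdot(s;v_{p+1}\dots v_{p+q})=(t\vee s;v_1\dots v_{p+q})$ by grafting on a new root. $\Delta$ is the unique linear map with $\Delta(1)=1\otimes1$, $\Delta(v)=v\otimes1+1\otimes v$ ($v\in V$) and $\Delta(x\cdot y)=\Delta(x)\cdot(1\otimes y)+(x\otimes1)\cdot\Delta(y)-x\otimes y$ (componentwise product on the tensor square); $\delta(x)=\Delta(x)-x\otimes1-1\otimes x$ on the augmentation ideal. Splitting: number the leaves of $t$ from $1$ to $r$ left to right; for $1\le i<r$, $t^i_{(1)}$ is the part of $t$ lying on the left of the path from leaf $i$ to the root (this path included) and $t^i_{(2)}$ is the part of $t$ lying on the right of the path from leaf $i+1$ to the root (this path included), each regarded as a planar binary tree (with $i$, resp. $r-i$, leaves) after erasing vertices with only one input. E.g. for $t=(x_1x_2)(x_3x_4)$ split at $i=2$, one gets $x_1x_2$ and $x_3x_4$. *)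

(* Defs.v *)
From HB Require Import structures.
From mathcomp Require Import all_boot all_order all_algebra.
From mathcomp Require Import finmap monalg.
Set Implicit Arguments. Unset Strict Implicit. Unset Printing Implicit Defensive.
Import GRing.Theory.
Local Open Scope ring_scope.

Inductive btree := BLeaf | BNode of btree & btree.

Fixpoint leaves (t : btree) : nat :=
  match t with BLeaf => 1%N | BNode l r => (leaves l + leaves r)%N end.

(* t^i_(1): part of t on the left of the path from leaf i to the root
   (path included), unary vertices erased; it has i leaves (1 <= i). *)
Fixpoint tree_split1 (t : btree) (i : nat) : btree :=
  match t with
  | BLeaf => BLeaf
  | BNode l r => if (i <= leaves l)%N then tree_split1 l i
                 else BNode l (tree_split1 r (i - leaves l))
  end.

(* Part of t on the right of the path from leaf j to the root (path
   included), unary vertices erased; it has (leaves t - j + 1) leaves. *)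
Fixpoint tree_split_right (t : btree) (j : nat) : btree :=
  match t with
  | BLeaf => BLeaf
  | BNode l r => if (leaves l < j)%N then tree_split_right r (j - leaves l)
                 else BNode (tree_split_right l j) r
  end.

(* t^i_(2): the part on the right of the path from leaf i+1 to the root. *)
Definition tree_split2 (t : btree) (i : nat) : btree := tree_split_right t i.+1.

(* Planar binary trees with leaves labelled in X: the free magma on X. *)
Inductive ltree (X : Type) := LLeaf of X | LNode of ltree X & ltree X.
Arguments LLeaf {X}. Arguments LNode {X}.

Fixpoint ltree_enc X (t : ltree X) : GenTree.tree X :=
  match t with
  | LLeaf x => GenTree.Leaf x
  | LNode l r => GenTree.Node 0 [:: ltree_enc l; ltree_enc r]
  end.
Fixpoint ltree_dec X (g : GenTree.tree X) : option (ltree X) :=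
  match g with
  | GenTree.Leaf x => Some (LLeaf x)
  | GenTree.Node _ [:: l; r] =>
      match ltree_dec l, ltree_dec r with
      | Some l', Some r' => Some (LNode l' r')
      | _, _ => None end
  | _ => None
  end.
Lemma ltree_encK X : pcancel (@ltree_enc X) (@ltree_dec X).
Proof. by elim=> [x|l IHl r IHr] //=; rewrite IHl IHr. Qed.

HB.instance Definition _ (X : choiceType) :=
  Choice.copy (ltree X) (pcan_type (@ltree_encK X)).

(* Basis of Mag(V) for V the vector space with basis X:
   None = the unit 1 (n = 0), Some t = a labelled tree (t; x_1 ... x_n). *)
Definition mbasis (X : choiceType) := option (ltree X).

Definition bmul (X : choiceType) (a b : mbasis X) : mbasis X :=
  match a, b with
  | None, _ => b
  | _, None => a
  | Some s, Some t => Some (LNode s t)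
  end.

Definition bilin (R : nzRingType) (A B C : choiceType) (f : A -> B -> C)
  (a : {malg R[A]}) (b : {malg R[B]}) : {malg R[C]} :=
  \sum_(p <- msupp a) \sum_(q <- msupp b) (a@_p * b@_q) *: << f p q >>.

(* V = vector space with basis X (every vector space is of this form). *)
Definition Vsp (K : fieldType) (X : choiceType) := {malg K[X]}.
Definition Mag (K : fieldType) (X : choiceType) := {malg K[mbasis X]}.
Definition Mag2 (K : fieldType) (X : choiceType) :=
  {malg K[(mbasis X * mbasis X)%type]}.

Section Ops.
Variables (K : fieldType) (X : choiceType).

Definition mag_one : Mag K X := << None >>.
Definition mag_mul (a b : Mag K X) : Mag K X := bilin (@bmul X) a b.
Definition tens (a b : Mag K X) : Mag2 K X := bilin (fun p q => (p, q)) a b.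
Definition mag2_mul (u w : Mag2 K X) : Mag2 K X :=
  bilin (fun p q => (bmul p.1 q.1, bmul p.2 q.2)) u w.
Definition vinc (v : Vsp K X) : Mag K X :=
  \sum_(x <- msupp v) v@_x *: << Some (LLeaf x) >>.

(* (t; v_1 ... v_r): defined through the product (grafting on a new root),
   i.e. multilinear in the v_i; vectors beyond/short of the leaves are
   irrelevant since the theorem assumes size vs = leaves t. *)
Fixpoint elem (t : btree) (vs : seq (Vsp K X)) : Mag K X :=
  match t with
  | BLeaf => vinc (head 0 vs)
  | BNode l r => mag_mul (elem l (take (leaves l) vs))
                         (elem r (drop (leaves l) vs))
  end.

Definition reduced (D : Mag K X -> Mag2 K X) (x : Mag K X) : Mag2 K X :=
  D x - tens x mag_one - tens mag_one x.
End Ops.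

(* Main.v *)
Require Import Defs.
From HB Require Import structures.
From mathcomp Require Import all_boot all_order all_algebra.
From mathcomp Require Import finmap monalg.
From mathcomp Require Import zify.
Set Implicit Arguments. Unset Strict Implicit. Unset Printing Implicit Defensive.
Import GRing.Theory.
Local Open Scope ring_scope.


Section Bil.
Variables (K : fieldType) (A B C : choiceType) (f : A -> B -> C).

Lemma bilinw (a : {malg K[A]}) (b : {malg K[B]}) (da : {fset A}) (db : {fset B}) :
  (msupp a `<=` da)%fset -> (msupp b `<=` db)%fset ->
  bilin f a b = \sum_(p <- da) \sum_(q <- db) (a@_p * b@_q) *: << f p q >>.
Proof.
move=> ha hb; rewrite /bilin (big_fset_incl _ ha); last first.
  by move=> p _ /mcoeff_outdom ->; apply: big1 => q _; rewrite mul0r scale0r.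
apply: eq_bigr => p _; apply: big_fset_incl hb _ => q _ /mcoeff_outdom ->.
by rewrite mulr0 scale0r.
Qed.

Lemma bilinDl (a1 a2 : {malg K[A]}) (b : {malg K[B]}) : bilin f (a1 + a2) b = bilin f a1 b + bilin f a2 b.
Proof.
have h1 : (msupp a1 `<=` msupp a1 `|` msupp a2)%fset by apply: fsubsetUl.
have h2 : (msupp a2 `<=` msupp a1 `|` msupp a2)%fset by apply: fsubsetUr.
rewrite (bilinw (msuppD_le a1 a2) (fsubset_refl (msupp b))).
rewrite (bilinw h1 (fsubset_refl (msupp b))) (bilinw h2 (fsubset_refl (msupp b))).
rewrite -big_split; apply: eq_bigr => p _; rewrite -big_split; apply: eq_bigr => q _.
by rewrite mcoeffD mulrDl scalerDl.
Qed.

Lemma bilinDr (a : {malg K[A]}) (b1 b2 : {malg K[B]}) : bilin f a (b1 + b2) = bilin f a b1 + bilin f a b2.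
Proof.
have h1 : (msupp b1 `<=` msupp b1 `|` msupp b2)%fset by apply: fsubsetUl.
have h2 : (msupp b2 `<=` msupp b1 `|` msupp b2)%fset by apply: fsubsetUr.
rewrite (bilinw (fsubset_refl (msupp a)) (msuppD_le b1 b2)).
rewrite (bilinw (fsubset_refl (msupp a)) h1) (bilinw (fsubset_refl (msupp a)) h2).
rewrite -big_split; apply: eq_bigr => p _; rewrite -big_split; apply: eq_bigr => q _.
by rewrite mcoeffD mulrDr scalerDl.
Qed.

Lemma bilinZl (c : K) (a : {malg K[A]}) (b : {malg K[B]}) : bilin f (c *: a) b = c *: bilin f a b.
Proof.
rewrite (bilinw (msuppZ_le c a) (fsubset_refl (msupp b))) /bilin scaler_sumr.
apply: eq_bigr => p _; rewrite scaler_sumr; apply: eq_bigr => q _.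
by rewrite mcoeffZ scalerA mulrA.
Qed.

Lemma bilinZr (c : K) (a : {malg K[A]}) (b : {malg K[B]}) : bilin f a (c *: b) = c *: bilin f a b.
Proof.
rewrite (bilinw (fsubset_refl (msupp a)) (msuppZ_le c b)) /bilin scaler_sumr.
apply: eq_bigr => p _; rewrite scaler_sumr; apply: eq_bigr => q _.
by rewrite mcoeffZ scalerA mulrCA.
Qed.

Lemma bilin0l (b : {malg K[B]}) : bilin f (0 : {malg K[A]}) b = 0.
Proof. by rewrite /bilin msupp0 big_nil. Qed.
Lemma bilin0r (a : {malg K[A]}) : bilin f a (0 : {malg K[B]}) = 0.
Proof. by rewrite /bilin msupp0; apply: big1 => p _; rewrite big_nil. Qed.

Lemma bilinUU p q : bilin f (<< p >> : {malg K[A]}) (<< q >> : {malg K[B]}) = << f p q >>.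
Proof.
by rewrite /bilin !msuppU !oner_eq0 !big_seq_fset1 !mcoeffU !eqxx mulr1 scale1r.
Qed.
End Bil.

Lemma malgUZ (K : fieldType) (A : choiceType) (c : K) (p : A) :
  << c *g p >> = c *: << p >> :> {malg K[A]}.
Proof.
by apply/malgP => k; rewrite mcoeffZ !mcoeffU mulr_natr.
Qed.

Lemma malg_ext (K : fieldType) (A : choiceType) (W : lmodType K)
  (F G : {malg K[A]} -> W) :
  (forall x y, F (x + y) = F x + F y) -> (forall c x, F (c *: x) = c *: F x) ->
  (forall x y, G (x + y) = G x + G y) -> (forall c x, G (c *: x) = c *: G x) ->
  (forall p, F << p >> = G << p >>) -> forall a, F a = G a.
Proof.
move=> FD FZ GD GZ FG a; rewrite (monalgE a).
apply: (big_ind (fun x => F x = G x)).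
- by rewrite -(scale0r (0 : {malg K[A]})) FZ GZ !scale0r.
- by move=> x y hx hy; rewrite FD GD hx hy.
- by move=> p _; rewrite malgUZ FZ GZ FG.
Qed.

Section MagL.
Variables (K : fieldType) (X : choiceType).
Local Notation one := (mag_one K X).

Lemma mag_mul1x (x : Mag K X) : mag_mul one x = x.
Proof.
rewrite /mag_mul /mag_one /bilin msuppU oner_eq0 big_seq_fset1 mcoeffUU.
rewrite [RHS]monalgE; apply: eq_bigr => q _; by rewrite mul1r malgUZ.
Qed.

Lemma mag_mulx1 (x : Mag K X) : mag_mul x one = x.
Proof.
rewrite /mag_mul /mag_one /bilin [RHS]monalgE; apply: eq_bigr => p _.
rewrite msuppU oner_eq0 big_seq_fset1 mcoeffUU mulr1 malgUZ.
by case: p.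
Qed.

Lemma mag2_tens (a b c d : Mag K X) :
  mag2_mul (tens a b) (tens c d) = tens (mag_mul a c) (mag_mul b d).
Proof.
rewrite /mag2_mul /tens /mag_mul.
set f2 := fun _ _ => _; set f1 := fun _ _ => _.
have lin := (bilinDl, bilinDr, bilinZl, bilinZr).
move: a; apply: (malg_ext (F := fun a => bilin f2 (bilin f1 a b) (bilin f1 c d))
                        (G := fun a => bilin f1 (bilin (@bmul X) a c) (bilin (@bmul X) b d)));
  try by move=> *; rewrite /= ?lin.
move=> p /=; move: b; apply: (malg_ext (F := fun b => bilin f2 (bilin f1 _ b) (bilin f1 c d))
                        (G := fun b => bilin f1 (bilin (@bmul X) _ c) (bilin (@bmul X) b d)));
  try by move=> *; rewrite /= ?lin.
move=> q /=; move: c; apply: (malg_ext (F := fun c => bilin f2 (bilin f1 _ _) (bilin f1 c d))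
                        (G := fun c => bilin f1 (bilin (@bmul X) _ c) (bilin (@bmul X) _ d)));
  try by move=> *; rewrite /= ?lin.
move=> r /=; move: d; apply: (malg_ext (F := fun d => bilin f2 (bilin f1 _ _) (bilin f1 _ d))
                        (G := fun d => bilin f1 (bilin (@bmul X) _ _) (bilin (@bmul X) _ d)));
  try by move=> *; rewrite /= ?lin.
by move=> s /=; rewrite !bilinUU.
Qed.
End MagL.

Lemma leaves_gt0 t : (0 < leaves t)%N.
Proof. elim: t => //= l IHl r IHr; lia. Qed.

Lemma split1_full t : tree_split1 t (leaves t) = t.
Proof.
elim: t => //= l IHl r IHr.
have := leaves_gt0 r => h.
have -> : (leaves l + leaves r <= leaves l)%N = false by lia.
by rewrite addKn IHr.
Qed.

Lemma sr_1 t : tree_split_right t 1 = t.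
Proof. elim: t => //= l IHl r IHr; rewrite ltnNge leaves_gt0 /= IHl //. Qed.

Lemma leaves_sr t j : (0 < j)%N -> (j <= leaves t)%N ->
  leaves (tree_split_right t j) = (leaves t - j).+1.
Proof.
elim: t j => [|l IHl r IHr] j /= j0 jl; first lia.
case: ifP => h /=.
  rewrite IHr; lia.
rewrite IHl; lia.
Qed.

Section Red.
Variables (K : fieldType) (X : choiceType).
Local Notation one := (mag_one K X).

Lemma mag2_mulDl (x y z : Mag2 K X) : mag2_mul (x + y) z = mag2_mul x z + mag2_mul y z.
Proof. exact: bilinDl. Qed.
Lemma mag2_mulDr (x y z : Mag2 K X) : mag2_mul z (x + y) = mag2_mul z x + mag2_mul z y.
Proof. exact: bilinDr. Qed.
Lemma mag2_mul0l (z : Mag2 K X) : mag2_mul 0 z = 0.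
Proof. exact: bilin0l. Qed.
Lemma mag2_mul0r (z : Mag2 K X) : mag2_mul z 0 = 0.
Proof. exact: bilin0r. Qed.

Lemma reduced_mul (D : Mag K X -> Mag2 K X) :
  (forall x y : Mag K X,
     D (mag_mul x y) =
       mag2_mul (D x) (tens one y) + mag2_mul (tens x one) (D y) - tens x y) ->
  forall a b, reduced D (mag_mul a b) =
    tens a b + mag2_mul (reduced D a) (tens one b) + mag2_mul (tens a one) (reduced D b).
Proof.
move=> H a b.
have E x : D x = reduced D x + tens x one + tens one x.
  by rewrite /reduced addrAC subrK subrK.
have Ea := E a; have Eb := E b.
move: (reduced D a) (reduced D b) Ea Eb => Ra Rb Ea Eb.
rewrite /reduced H Ea Eb !mag2_mulDl !mag2_mulDr !mag2_tens
  !mag_mul1x !mag_mulx1.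
move: (mag2_mul Ra (tens one b)) (tens a b) (tens one (mag_mul a b)) (mag2_mul (tens a one) Rb) (tens (mag_mul a b) one) => p q r s t.
apply/eqP; rewrite !subr_eq (addrC p q) !addrA [q + p + r + s]addrAC //.
Qed.
End Red.

Theorem lemma1p6 (K : fieldType) (X : choiceType)
  (Delta : {linear Mag K X -> Mag2 K X}) :
  Delta (mag_one K X) = tens (mag_one K X) (mag_one K X) ->
  (forall v : Vsp K X,
     Delta (vinc v) = tens (vinc v) (mag_one K X) + tens (mag_one K X) (vinc v)) ->
  (forall x y : Mag K X,
     Delta (mag_mul x y) =
       mag2_mul (Delta x) (tens (mag_one K X) y)
       + mag2_mul (tens x (mag_one K X)) (Delta y) - tens x y) ->
  forall (t : btree) (vs : seq (Vsp K X)), size vs = leaves t ->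
  reduced Delta (elem t vs) =
    \sum_(1 <= i < leaves t)
      tens (elem (tree_split1 t i) (take i vs)) (elem (tree_split2 t i) (drop i vs)).
Proof.
move=> _ HV HM t; elim: t => [|l IHl r IHr] vs Hs.
  by rewrite /= /reduced HV addrAC addrK subrr big_geq.
have pg := leaves_gt0 l; have qg := leaves_gt0 r.
rewrite /= in Hs.
set p := leaves l in Hs pg *; set q := leaves r in Hs qg *.
rewrite [elem _ _]/= -/p reduced_mul // IHl ?size_takel ?Hs ?leq_addr //.
rewrite IHr ?size_drop ?Hs ?addKn //.
rewrite (big_morph (fun x => mag2_mul x (tens (mag_one K X) _))
          (fun x y => mag2_mulDl x y _) (mag2_mul0l _)).
rewrite (big_morph (fun x => mag2_mul (tens _ (mag_one K X)) x)
          (fun x y => mag2_mulDr x y _) (mag2_mul0r _)).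
rewrite [leaves (BNode l r)]/= -/p -/q.
rewrite (@big_cat_nat _ _ _ p 1 (p + q)) ?leq_addr //.
rewrite (@big_ltn _ _ _ p (p + q)); last by rewrite -addn1 leq_add2l.
rewrite -[p.+1]add1n big_addn.
rewrite addKn.
have h2 : tens (elem (tree_split1 (BNode l r) p) (take p vs))
             (elem (tree_split2 (BNode l r) p) (drop p vs))
          = tens (elem l (take p vs)) (elem r (drop p vs)).
  by rewrite /tree_split2 /= leqnn split1_full ltnSn subSnn sr_1.
have h1 : \sum_(1 <= i < p)
    mag2_mul
      (tens (elem (tree_split1 l i) (take i (take p vs)))
         (elem (tree_split2 l i) (drop i (take p vs))))
      (tens (mag_one K X) (elem r (drop p vs))) =
  \sum_(1 <= i < p) tens (elem (tree_split1 (BNode l r) i) (take i vs))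
         (elem (tree_split2 (BNode l r) i) (drop i vs)).
  apply: eq_big_nat => i /andP[i1 ip].
  rewrite mag2_tens mag_mulx1 take_takel ?(ltnW ip) //.
  rewrite /tree_split2 /=.
  have -> : (i <= leaves l)%N = true by rewrite -/p; lia.
  have -> : (leaves l < i.+1)%N = false by rewrite -/p; lia.
  rewrite /= leaves_sr // -/p.
  rewrite take_drop drop_drop.
  have -> : ((p - i.+1).+1 + i = p)%N by lia.
  by [].
have h3 : \sum_(1 <= i < q)
    mag2_mul (tens (elem l (take p vs)) (mag_one K X))
      (tens (elem (tree_split1 r i) (take i (drop p vs)))
         (elem (tree_split2 r i) (drop i (drop p vs)))) =
  \sum_(1 <= i < q) tens (elem (tree_split1 (BNode l r) (i + p)) (take (i + p) vs))
            (elem (tree_split2 (BNode l r) (i + p)) (drop (i + p) vs)).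
  apply: eq_big_nat => i /andP[i1 iq].
  rewrite mag2_tens mag_mul1x.
  rewrite /tree_split2 /=.
  have -> : (i + p <= leaves l)%N = false by rewrite -/p; lia.
  have -> : (leaves l < (i + p).+1)%N = true by rewrite -/p; lia.
  rewrite -/p addnK /= take_takel ?leq_addl // take_drop drop_drop.
  have -> : ((i + p).+1 - p = i.+1)%N by lia.
  by [].
rewrite h1 h3 h2 /=.
by rewrite [RHS]addrCA addrA.
Qed.
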